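(* For every $m\ge1$, $\dim\mathcal{H}_{(m)}\ge\frac{(m-1)!}{m}$, and $\dim\mathcal{H}_{(m)}\sim\frac{(m-1)!}{m}$ as $m\to\infty$.
   Context: $\mathcal{H}_{(m)}$ is the quotient of the span in $\mathbb{C}[\mathbb{S}_m]$ of all $m$-cycles by the span of those generalized Vassiliev elements all of whose terms are $m$-cycles, where for $m\ge2$, $\gamma\in\mathbb{S}_{m-1}$, $q\in[m-1]\cup\{*\}$, $t\in\{0,\dots,m-1\}$, $\alpha_t\in\mathbb{S}_m$ is obtained by inserting a new point $x$ into the line $1<\dots<m-1$ in the gap between $t$ and $t+1$, relabeling in order, acting as $\gamma$ on old points except $q\mapsto x\mapsto\gamma(q)$ if $q\ne*$, $x$ fixed if $q=*$, and for a cycle $v$ of $\gamma$, $E(\gamma,q,v)=\sum_{j\in v}(\alpha_{j-1}-\alpha_j)$. *)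

(* Defs.v *)
From HB Require Import structures.
From mathcomp Require Import all_boot all_order all_algebra all_fingroup all_field.
Set Implicit Arguments. Unset Strict Implicit. Unset Printing Implicit Defensive.
Import Order.TTheory GRing.Theory Num.Theory.
Local Open Scope ring_scope.

(* Conventions: the point set [m] = {1,...,m} is modelled by 'I_m = {0,...,m-1}
   (point k+1 <-> ordinal k).  We write m = n.+1, so gamma ranges over 'S_n
   (= S_{m-1}) and the gap index t over 'I_n.+1 = {0,...,m-1}.
   The group algebra C[S_m] is modelled by finite functions 'S_m -> algC
   (algC = algebraic complex numbers). *)

Definition GA (m : nat) := {ffun 'S_m -> algC^o}.

Definition pvec m (s : 'S_m) : GA m := [ffun u => (u == s)%:R].

Definition mcycle m (s : 'S_m) : bool := [exists x, #|porbit s x| == m].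

(* alpha_t(gamma, q): insert a new point x in gap t (new label t+1, i.e.
   ordinal t), relabel in order (old 0-indexed point i goes to lift t i);
   q = None encodes q = *, in which case x is fixed; otherwise
   q |-> x |-> gamma(q).  Permutations compose left-to-right: (s * u) y = u (s y). *)
Definition alpha n (g : 'S_n) (q : option 'I_n) (t : 'I_n.+1) : 'S_n.+1 :=
  match q with
  | None => lift_perm t t g
  | Some q' => tperm t (lift t q') * lift_perm t t g
  end.

(* generalized Vassiliev element E(gamma, q, v) = sum_{j in v} (alpha_{j-1} - alpha_j)
   (1-indexed j; with 0-indexed j' = j-1 the gaps are j' and j'+1) *)
Definition Evass n (g : 'S_n) (q : option 'I_n) (v : {set 'I_n}) : GA n.+1 :=
  \sum_(j in v) (pvec (alpha g q (inord j)) - pvec (alpha g q (inord j.+1))).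

Definition all_terms_mcycles m (e : GA m) : bool :=
  [forall s : 'S_m, (e s != 0) ==> mcycle s].

Definition cycle_span m : {vspace GA m} :=
  <<[seq pvec s | s <- enum 'S_m & mcycle s]>>%VS.

Definition vass_elems n : seq (GA n.+1) :=
  flatten [seq flatten [seq [seq Evass g q v | v <- enum (porbits g)]
                        | q <- enum {: option 'I_n}]
          | g <- enum {: 'S_n}].

Definition vass_span n : {vspace GA n.+1} :=
  <<[seq e <- vass_elems n | all_terms_mcycles e]>>%VS.

(* dim H_(m) = dim(cycle_span) - dim(vass_span) (vass_span is a subspace of
   cycle_span); only meaningful for m >= 1. *)
Definition dimH (m : nat) : nat :=
  match m with
  | 0 => 0
  | n.+1 => (\dim (cycle_span n.+1) - \dim (vass_span n))%N
  end.

(* Main.v *)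
Require Import Defs.
From HB Require Import structures.
From mathcomp Require Import all_boot all_order all_algebra all_fingroup all_field.
From mathcomp Require Import zify ring lra.
Import Order.TTheory GRing.Theory Num.Theory.
Set Implicit Arguments. Unset Strict Implicit. Unset Printing Implicit Defensive.

Local Open Scope group_scope.

Section Rho.
Variable n : nat.
Local Notation m := n.+1.

Definition rho : 'S_m := perm (@ordS_inj m).
Definition rr : 'S_m := rho^-1.

Lemma rhoE i : rho i = ordS i.
Proof. by rewrite permE. Qed.

Lemma rhoX k (i : 'I_m) : val ((rho ^+ k) i) = (i + k) %% m.
Proof.
elim: k => [|k IH]; first by rewrite expg0 perm1 addn0 modn_small.
rewrite expgSr permM rhoE /= IH.
by rewrite -addn1 modnDml -addnA addn1.
Qed.

Lemma rhoXm : rho ^+ m = 1.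
Proof.
apply/permP => i; apply: val_inj; rewrite rhoX perm1 modnDr modn_small //.
Qed.

Lemma rrE w : rr w = ord_pred w.
Proof.
apply: (@perm_inj _ rho); rewrite /rr permKV rhoE ord_predK //.
Qed.

Lemma rrv w : val (rr w) = (w + n) %% m.
Proof. by rewrite rrE /= addnS. Qed.

Lemma comm_eq (s t : 'S_m) : commute s t <-> forall i, t (s i) = s (t i).
Proof.
split => [H i | H]; first by rewrite -permM H permM.
by apply/permP => i; rewrite !permM H.
Qed.

Lemma conj_fix (s t : 'S_m) : s ^ t = s <-> forall i, s (t i) = t (s i).
Proof.
split => [H i | H].
  by rewrite -[RHS]permJ H.
apply/permP => y; rewrite -(permKV t y) permJ H //.
Qed.

End Rho.

Local Open Scope group_scope.

Section Orb.
Variable T : finType.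

Lemma orbit_sub (s : {perm T}) (A : {set T}) y :
  y \in A -> (forall z, z \in A -> s z \in A) -> porbit s y \subset A.
Proof.
move=> yA cl; apply/subsetP => z /porbitP [i ->].
rewrite permX; elim: i => [|i IH] //=; exact: cl.
Qed.

Lemma mcycle_all m (s : 'S_m) : mcycle s -> forall y, porbit s y = setT.
Proof.
case/existsP => x /eqP cx y.
have ex : porbit s x = setT.
  by apply/eqP; rewrite eqEcard subsetT cardsT card_ord cx leqnn.
apply/eqP; rewrite -ex eq_porbit_mem ex inE //.
Qed.

Lemma porbitJ (s t : {perm T}) x : porbit (s ^ t) (t x) = t @: porbit s x.
Proof.
apply/setP => y; apply/porbitP/imsetP => [[i ->] | [z /porbitP [i ->] ->]].
  by exists ((s ^+ i) x); [exact: mem_porbit | rewrite -conjXg permJ].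
by exists i; rewrite -conjXg permJ.
Qed.

End Orb.

Lemma mcycleJ m (s t : 'S_m) : mcycle s -> mcycle (s ^ t).
Proof.
case/existsP => x cx; apply/existsP; exists (t x).
by rewrite porbitJ card_imset //; exact: perm_inj.
Qed.

Section Alpha.
Variable n : nat.
Local Notation m := n.+1.
Implicit Types (g : 'S_n) (q : 'I_n) (t : 'I_m).

Lemma alpha_t g q t : alpha g (Some q) t t = lift t (g q).
Proof. by rewrite /alpha permM tpermL lift_perm_lift. Qed.

Lemma alpha_lq g q t : alpha g (Some q) t (lift t q) = t.
Proof. by rewrite /alpha permM tpermR lift_perm_id. Qed.

Lemma alpha_lk g q t k : k != q -> alpha g (Some q) t (lift t k) = lift t (g k).
Proof.
move=> kq; rewrite /alpha permM tpermD ?lift_perm_lift //.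
  by rewrite neq_lift.
by rewrite (inj_eq (@lift_inj _ t)) eq_sym.
Qed.

Lemma key2 g q t : mcycle (alpha g (Some q) t) -> porbit g q = setT.
Proof.
move=> mc; apply/setP => y; rewrite inE; apply/negPn/negP => yq.
have qy : q \notin porbit g y by rewrite porbit_sym.
set A := [set lift t z | z in porbit g y].
have sub : porbit (alpha g (Some q) t) (lift t y) \subset A.
  apply: orbit_sub; first by apply: imset_f; exact: porbit_id.
  move=> z' /imsetP [z zy ->].
  have zq : z != q by apply: contraNneq qy => <-.
  rewrite alpha_lk //; apply: imset_f.
  have : g z \in porbit g z by have := mem_porbit g 1 z; rewrite expg1.
  have /eqP E : porbit g z == porbit g y by rewrite eq_porbit_mem.
  by rewrite E.
move: (subset_leq_card sub); rewrite (mcycle_all mc) cardsT card_ord.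
move=> H; have := leq_trans H (leq_imset_card _ _).
move=> H2; have := leq_trans H2 (max_card _); rewrite card_ord ltnn //.
Qed.

Lemma key2None g t : mcycle (alpha g None t) -> n = 0%N.
Proof.
move=> mc.
have sub : porbit (alpha g None t) t \subset [set t].
  apply: orbit_sub; first by rewrite inE.
  by move=> z; rewrite inE => /eqP ->; rewrite /alpha lift_perm_id inE.
move: (subset_leq_card sub); rewrite (mcycle_all mc) cardsT card_ord cards1.
by case: n.
Qed.

End Alpha.

Local Open Scope group_scope.

Section Key.
Variable n : nat.
Local Notation m := n.+1.
Implicit Types (g : 'S_n) (q : 'I_n) (t : 'I_m).

Lemma rr_lift (k : 'I_n) : rr n (lift ord0 k) = lift ord_max k.
Proof.
apply: val_inj; rewrite rrv /= /bump /= leqNgt ltn_ord /= add0n add1n addSnnS modnDr.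
by rewrite modn_small // (ltn_trans (ltn_ord k)).
Qed.

Lemma rr0 : rr n ord0 = ord_max.
Proof. by apply: val_inj; rewrite rrv /= add0n modn_small. Qed.

Lemma key1 g q : alpha g (Some q) ord_max = (alpha g (Some q) ord0) ^ (rr n).
Proof.
apply/permP => y.
have -> : y = rr n (rho n y) by rewrite /rr permK.
rewrite permJ; case: (unliftP ord0 (rho n y)) => [k|] ->.
  rewrite rr_lift; case: (eqVneq k q) => [->|kq].
    by rewrite !alpha_lq rr0.
  by rewrite !alpha_lk // rr_lift.
by rewrite rr0 !alpha_t rr_lift.
Qed.

Lemma pvecE (s u : 'S_m) : pvec s u = ((u == s)%:R)%R.
Proof. by rewrite ffunE. Qed.

Lemma EvassE g (q : option 'I_n) v u :
  Evass g q v u = (\sum_(j in v) ((u == alpha g q (inord j))%:R - (u == alpha g q (inord j.+1))%:R))%R.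
Proof.
rewrite /Evass sum_ffunE; apply: eq_bigr => j _; rewrite !ffunE //.
Qed.

Lemma Evass_supp g (q : option 'I_n) v u :
  (Evass g q v u != 0)%R -> exists t, u = alpha g q t.
Proof.
case: (boolP [exists t, u == alpha g q t]) => [/existsP [t /eqP ->] _| /existsPn H].
  by exists t.
rewrite EvassE big1 ?eqxx // => j _.
have H1 : forall t, (u == alpha g q t) = false by move=> t; apply/negbTE; exact: H.
by rewrite !H1 subrr.
Qed.

Lemma Evass_T g (q : option 'I_n) :
  Evass g q setT = (pvec (alpha g q ord0) - pvec (alpha g q ord_max))%R.
Proof.
rewrite /Evass (eq_bigl (fun _ => true)); last by move=> j; rewrite inE.
pose F k := pvec (alpha g q (inord k)).
rewrite (eq_bigr (fun j : 'I_n => - (F j.+1 - F j))%R); last by move=> j _; rewrite opprB.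
rewrite sumrN -(big_mkord xpredT (fun j => F j.+1 - F j)%R) telescope_sumr // opprB /F.
congr (pvec (alpha g q _) - pvec (alpha g q _))%R; apply: val_inj; rewrite /= inordK //.
Qed.

End Key.

Local Open Scope group_scope.

Definition fc n (s : 'S_n.+1) := s ^ rr n.
Definition Dl n : seq (GA n.+1) :=
  [seq (pvec s - pvec (fc s))%R | s <- enum 'S_n.+1 & mcycle s].

Section Construct.
Variable n : nat.
Local Notation m := n.+1.

Lemma mcycle_fix (s : 'S_m) x : mcycle s -> s x = x -> n = 0%N.
Proof.
move=> mc sx.
have sub : porbit s x \subset [set x].
  apply: orbit_sub; first by rewrite inE.
  by move=> z; rewrite inE => /eqP ->; rewrite sx inE.
move: (subset_leq_card sub); rewrite (mcycle_all mc) cardsT card_ord cards1.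
by case: n.
Qed.

Lemma fix0 (s' : 'S_m) : s' ord0 = ord0 -> exists g : 'S_n, lift_perm ord0 ord0 g = s'.
Proof.
move=> s0.
pose gf (k : 'I_n) := odflt k (unlift ord0 (s' (lift ord0 k))).
have gfE k : lift ord0 (gf k) = s' (lift ord0 k).
  rewrite /gf; case: (unliftP ord0 (s' (lift ord0 k))) => [j|] E; first by rewrite E.
  have E' := perm_inj (etrans E (esym s0)).
  by move: (neq_lift ord0 k); rewrite E' eqxx.
have gi : injective gf.
  by move=> a b /(congr1 (lift ord0)); rewrite !gfE => /perm_inj /lift_inj.
exists (perm gi); apply/permP => y; case: (unliftP ord0 y) => [k|] ->.
  by rewrite lift_perm_lift permE gfE.
by rewrite lift_perm_id s0.
Qed.

Lemma construct (s : 'S_m) : (0 < n)%N -> mcycle s ->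
  exists g q, alpha g (Some q) ord0 = s.
Proof.
move=> n0 mc.
have s0 : s ord0 != ord0.
  by apply/eqP => E; move: (mcycle_fix mc E) n0 => ->.
set y := s^-1 ord0.
have y0 : y != ord0.
  by apply: contra s0 => /eqP E; rewrite -{1}E /y permKV.
case: (unliftP ord0 y) y0 => [q Eq|->]; last by rewrite eqxx.
move=> _.
have [g Eg] : exists g : 'S_n, lift_perm ord0 ord0 g = tperm ord0 y * s.
  apply: fix0; rewrite permM tpermL /y permKV //.
exists g, q; rewrite /alpha Eg -Eq mulgA tperm2 mul1g //.
Qed.

End Construct.

Section Vass.
Variable n : nat.
Local Notation m := n.+1.

Lemma ffun_nz (e : GA m) : e != 0%R -> exists u, (e u != 0)%R.
Proof.
move=> nz; case: (boolP [exists u, (e u != 0)%R]) => [/existsP [u Hu]|/existsPn H].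
  by exists u.
case/eqP: nz; apply/ffunP => u; rewrite ffunE; apply/eqP; move: (H u); rewrite negbK //.
Qed.

Lemma EvassTE (g : 'S_n) (q : 'I_n) : Evass g (Some q) setT = (pvec (alpha g (Some q) ord0) - pvec (fc (alpha g (Some q) ord0)))%R.
Proof. by rewrite Evass_T key1. Qed.

Lemma D_in_vass (s : 'S_m) : mcycle s -> (pvec s - pvec (fc s))%R \in vass_span n.
Proof.
move=> mc.
case: (posnP n) => [n0|n0].
  have -> : fc s = s.
    move: s mc; rewrite /fc /rr /rho; rewrite n0 => s _.
    by rewrite !(permS1 s) !(permS1 (_ ^ _)).
  by rewrite subrr mem0v.
have [g [q Es]] := construct n0 mc.
have Hset : porbit g q = setT by apply: (key2 (t := ord0)); rewrite Es.
rewrite -Es -EvassTE; apply: memv_span; rewrite mem_filter; apply/andP; split.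
  apply/forallP => u; apply/implyP; rewrite EvassTE Es !ffunE.
  case: (eqVneq u s) => [->|us] //; case: (eqVneq u (fc s)) => [->|ufs] //.
    by move=> _; exact: mcycleJ.
  by rewrite subrr eqxx.
apply/flatten_mapP; exists g; first by rewrite mem_enum.
apply/flatten_mapP; exists (Some q); first by rewrite mem_enum.
apply/mapP; exists setT => //; rewrite mem_enum -Hset; exact: imset_f.
Qed.

Lemma vass_in_D e : e \in [seq e <- vass_elems n | all_terms_mcycles e] -> e \in <<Dl n>>%VS.
Proof.
rewrite mem_filter => /andP [atm ein].
case/flatten_mapP: ein => g _ /flatten_mapP [q _ /mapP [v]].
rewrite mem_enum => /imsetP [x _ ->] Ee; subst e.
set ee := Evass _ _ _.
case: (eqVneq ee 0%R) => [->|nz]; first exact: mem0v.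
have [u Hu] := ffun_nz nz.
have mu : mcycle u by move/forallP: atm => /(_ u) /implyP; apply.
have [t Et] := Evass_supp Hu.
case: q atm Et @ee nz Hu => [q|] atm Et ee nz Hu; last first.
  rewrite Et in mu; have n0 := key2None mu; have := ltn_ord x; by rewrite {2}n0.
rewrite Et in mu; have Hset := key2 mu.
have Ev : porbit g x = setT.
  by apply/eqP; rewrite -Hset eq_porbit_mem Hset inE.
move: nz atm; rewrite /ee Ev EvassTE; set a := alpha g (Some q) ord0 => nz atm.
have ma : mcycle a.
  move/forallP: atm => /(_ a) /implyP; apply; rewrite !ffunE eqxx.
  case: (eqVneq a (fc a)) => [E|] /=; last by rewrite subr0 oner_eq0.
  by move: nz; rewrite -E subrr eqxx.
apply: memv_span; apply: map_f; rewrite mem_filter ma mem_enum //.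
Qed.

Lemma vass_eq : vass_span n = <<Dl n>>%VS.
Proof.
apply: subv_anti; apply/andP; split; apply/span_subvP.
  by move=> e; exact: vass_in_D.
move=> e /mapP [s]; rewrite mem_filter => /andP [mc _] ->; exact: D_in_vass.
Qed.

End Vass.

Local Open Scope group_scope.

Section LinAlg.
Variable n : nat.
Local Notation m := n.+1.
Local Notation f := (@fc n).

Lemma finj : injective f.
Proof. by move=> a b; rewrite /fc => /conjg_inj. Qed.

Lemma symf : connect_sym (coerced_frel f).
Proof. by move=> x y; exact: (fconnect_sym finj). Qed.

Lemma rootf s : froot f (f s) = froot f s.
Proof. symmetry; apply/(fingraph.rootP symf); exact: fconnect1. Qed.

Lemma mcycle_iter k s : mcycle s -> mcycle (iter k f s).
Proof. by elim: k => [|k IH] //= mc; apply: mcycleJ; exact: IH. Qed.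

Lemma conn_iter a b : fconnect f a b -> exists k, b = iter k f a.
Proof. by move=> H; exists (findex f a b); rewrite iter_findex. Qed.

Lemma conn_mcycle a b : fconnect f a b -> mcycle a -> mcycle b.
Proof. by case/conn_iter => k ->; exact: mcycle_iter. Qed.

Definition Rl := [seq s <- enum 'S_m | mcycle s && (froot f s == s)].
Definition Rv := map (@pvec m) Rl.
Local Notation W := (<<Dl n>>%VS).

Lemma L0 a k : mcycle a -> (pvec a - pvec (iter k f a))%R \in W.
Proof.
move=> ma; elim: k => [|k IH]; first by rewrite subrr mem0v.
have -> : (pvec a - pvec (iter k.+1 f a) = (pvec a - pvec (iter k f a)) + (pvec (iter k f a) - pvec (f (iter k f a))))%R.
  by rewrite /= addrA subrK.
apply: memvD => //; apply: memv_span; apply: map_f.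
by rewrite mem_filter mem_enum mcycle_iter.
Qed.

Lemma W_sub : (W <= cycle_span m)%VS.
Proof.
apply/span_subvP => e /mapP [s]; rewrite mem_filter => /andP [mc _] ->.
apply: memvB; apply: memv_span; apply: map_f; rewrite mem_filter mem_enum andbT //.
exact: mcycleJ.
Qed.

Lemma R_sub : (<<Rv>> <= cycle_span m)%VS.
Proof.
apply/span_subvP => e /mapP [s]; rewrite mem_filter => /andP [/andP [mc _] _] ->.
apply: memv_span; apply: map_f; rewrite mem_filter mem_enum ?mc //.
Qed.

Lemma L1 : cycle_span m = (W + <<Rv>>)%VS.
Proof.
apply: subv_anti; apply/andP; split; last by rewrite subv_add W_sub R_sub.
apply/span_subvP => e /mapP [s]; rewrite mem_filter => /andP [mc _] ->.
set r := froot f s.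
have [k Ek] := conn_iter (connect_root _ s).
have -> : pvec s = (pvec s - pvec r + pvec r)%R by rewrite subrK.
apply: memv_add; first by rewrite /r Ek; exact: L0.
apply: memv_span; apply: map_f; rewrite mem_filter mem_enum andbT.
rewrite /r (fingraph.root_root symf) eqxx andbT Ek; exact: mcycle_iter.
Qed.

Definition lam (r : 'S_m) (w : GA m) : algC := (\sum_(s | froot f s == r) w s)%R.

Lemma lam_lin r N (k : 'I_N -> algC) (X : 'I_N -> GA m) :
  lam r (\sum_i k i *: X i)%R = (\sum_i k i * lam r (X i))%R.
Proof.
rewrite /lam; under eq_bigr do rewrite sum_ffunE.
rewrite exchange_big; apply: eq_bigr => i _; rewrite mulr_sumr.
by apply: eq_bigr => s _; rewrite ffunE.
Qed.

Lemma sum_ind (P : pred 'S_m) s : (\sum_(u | P u) pvec s u)%R = ((P s)%:R)%R.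
Proof.
rewrite big_mkcond /= (bigD1 s) //= big1 ?addr0.
  by rewrite pvecE eqxx; case: (P s).
by move=> u /negbTE us; rewrite pvecE us; case: (P u).
Qed.

Lemma lamD r s : lam r (pvec s - pvec (f s))%R = 0%R.
Proof.
rewrite /lam (eq_bigr (fun u => pvec s u - pvec (f s) u)%R); last by move=> u _; rewrite !ffunE.
by rewrite sumrB !sum_ind rootf subrr.
Qed.

Lemma W_lam w r : w \in W -> lam r w = 0%R.
Proof.
move=> wW; rewrite (coord_span (X := in_tuple (Dl n)) wW) lam_lin big1 // => i _.
have : nth 0%R (Dl n) i \in Dl n by apply: mem_nth.
case/mapP => s _ ->; by rewrite lamD mulr0.
Qed.

Lemma R_out w u : w \in <<Rv>>%VS -> u \notin Rl -> w u = 0%R.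
Proof.
move=> wR uR; rewrite (coord_span (X := in_tuple Rv) wR) sum_ffunE big1 // => i _.
have : nth 0%R Rv i \in Rv by apply: mem_nth.
case/mapP => s sR ->; rewrite ffunE pvecE.
case: (eqVneq u s) => [us|_]; last by rewrite scaler0.
by move: uR; rewrite us sR.
Qed.

Lemma L2 : (W :&: <<Rv>> = 0)%VS.
Proof.
apply/eqP; rewrite -subv0; apply/subvP => w; rewrite memv_cap => /andP [wW wR].
rewrite memv0; apply/eqP/ffunP => u; rewrite ffunE.
case: (boolP (u \in Rl)) => uR; last exact: R_out.
have ru : froot f u == u by move: uR; rewrite mem_filter => /andP [/andP [_ ->] _].
have := W_lam u wW; rewrite /lam (bigD1 u) //= big1 ?addr0 // => s /andP [rs su].
apply: R_out => //; apply/negP; rewrite mem_filter => /andP [/andP [_ rss] _].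
by move: su; rewrite -(eqP rs) (eqP rss) eqxx.
Qed.

Lemma L3 : free Rv.
Proof.
have uR : uniq Rl by rewrite filter_uniq // enum_uniq.
suff : free (in_tuple Rv) by []. apply/freeP => k Hk i.
have := congr1 (fun w : GA m => w (nth 1 Rl i)) Hk; rewrite sum_ffunE ffunE.
have iR : i < size Rl by rewrite -(size_map (@pvec m)); exact: ltn_ord.
rewrite (bigD1 i) //= big1 ?addr0.
  rewrite ffunE (nth_map 1) // pvecE eqxx.
  by move=> <-; exact: (esym (mulr1 _)).
move=> j ji.
have jR : j < size Rl by rewrite -(size_map (@pvec m)); exact: ltn_ord.
rewrite ffunE (nth_map 1) // pvecE nth_uniq // (_ : (i == j :> nat) = false) ?scaler0 //.
by apply/negbTE; rewrite eq_sym; exact: ji.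
Qed.

Lemma dimH_eq : dimH m = size Rl.
Proof.
rewrite /= vass_eq L1 dimv_disjoint_sum ?L2 // addKn.
by move/eqP: L3; rewrite size_map.
Qed.

End LinAlg.

Local Open Scope group_scope.

Definition comb m (s t : 'S_m) := [forall y, s (t y) == t (s y)].

Section Count.
Variable n : nat.
Local Notation m := n.+1.
Local Notation rho := (rho n).

Lemma combP (s t : 'S_m) : reflect (forall y, s (t y) = t (s y)) (comb s t).
Proof. by apply: (iffP forallP) => H y; apply/eqP. Qed.

Lemma comm_det k (s1 s2 : 'S_m) : (0 < k)%N -> comb s1 (rho ^+ k) -> comb s2 (rho ^+ k) ->
  (forall i : 'I_m, (i < k)%N -> s1 i = s2 i) -> s1 = s2.
Proof.
move=> k0 /combP c1 /combP c2 H.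
suff S : forall N (i : 'I_m), (i < N)%N -> s1 i = s2 i.
  by apply/permP => i; apply: (S m).
elim => [|N IH] i; first by [].
rewrite ltnS leq_eqVlt => /orP [/eqP iN|]; last exact: IH.
case: (ltnP i k) => ik; first exact: H.
have jlt : (i - k < m)%N by apply: leq_ltn_trans (leq_subr k i) (ltn_ord i).
pose j := Ordinal jlt.
have Ej : (rho ^+ k) j = i.
  by apply: val_inj; rewrite rhoX /= subnK // modn_small.
rewrite -Ej c1 c2 IH //= iN.
by rewrite -subn_gt0 subKn ?k0 // -iN.
Qed.

Lemma card_cent : #|'C[rho]| = m.
Proof.
apply/eqP; rewrite eqn_leq; apply/andP; split.
  have inj : {in 'C[rho] &, injective (fun s : 'S_m => s ord0)}.
    move=> s1 s2 /cent1P /comm_eq c1 /cent1P /comm_eq c2 E.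
    apply: (@comm_det 1) => //.
    - by apply/combP => y; rewrite expg1 c1.
    - by apply/combP => y; rewrite expg1 c2.
    by move=> i; rewrite ltnS leqn0 => /eqP i0; rewrite (_ : i = ord0) //; apply: val_inj.
  rewrite -(card_in_imset inj); apply: leq_trans (max_card _) _; rewrite card_ord //.
have inj : injective (fun i : 'I_m => rho ^+ i).
  move=> i j /(congr1 (fun s : 'S_m => val (s ord0))); rewrite !rhoX /= !add0n.
  by rewrite !modn_small // => /val_inj.
rewrite -[X in (X <= _)%N]card_ord -(card_imset _ inj); apply: subset_leq_card.
apply/subsetP => s /imsetP [i _ ->]; apply/cent1P; apply: commute_sym; exact: commuteX.
Qed.

Lemma mcycle_rho : mcycle rho.
Proof.
apply/existsP; exists ord0; apply/eqP.
have -> : porbit rho ord0 = setT.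
  apply/setP => i; rewrite inE; apply/porbitP; exists i.
  by apply: val_inj; rewrite rhoX add0n modn_small.
by rewrite cardsT card_ord.
Qed.

Lemma cycle_class (s : 'S_m) : mcycle s -> s \in rho ^: [set: 'S_m].
Proof.
move=> mc.
have ps x : #|porbit s x| = m by rewrite (mcycle_all mc) cardsT card_ord.
pose x := (ord0 : 'I_m).
have U := uniq_traject_porbit s x; rewrite ps in U.
pose tf (i : 'I_m) := iter i s x.
have tfi : injective tf.
  move=> i j E; apply: val_inj.
  have := E; rewrite /tf -!(nth_traject s (ltn_ord _) x) => /eqP.
  by rewrite nth_uniq ?size_traject // => /eqP.
pose t := perm tfi.
have -> : s = rho ^ t.
  apply/permP => y; rewrite -(permKV t y); set i := t^-1 y.
  rewrite permJ !permE /tf /=.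
  case: (ltnP i.+1 m) => H.
    by rewrite modn_small.
  have Ei : i.+1 = m by apply/eqP; rewrite eqn_leq H ltn_ord.
  rewrite Ei modnn /=.
  transitivity (iter i.+1 s x) => //; rewrite Ei; have := iter_porbit s x; by rewrite ps.
exact: memJ_class (in_setT t).
Qed.

Lemma class_cycle (s : 'S_m) : s \in rho ^: [set: 'S_m] -> mcycle s.
Proof. by case/imsetP => t _ ->; exact: mcycleJ mcycle_rho. Qed.

Lemma card_cycles : #|[set s : 'S_m | mcycle s]| = n`!.
Proof.
have -> : [set s : 'S_m | mcycle s] = rho ^: [set: 'S_m].
  by apply/setP => s; rewrite inE; apply/idP/idP; [exact: cycle_class | exact: class_cycle].
rewrite -(index_cent1 [set: 'S_m]%G) indexgI.
have := LagrangeI [set: 'S_m] 'C[rho]; rewrite setTI card_cent cardsT card_Sn factS.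
by move/eqP; rewrite eqn_mul2l /= => /eqP.
Qed.

End Count.

Local Open Scope group_scope.

Section Orbits.
Variable n : nat.
Local Notation m := n.+1.
Local Notation f := (@fc n).
Local Notation rho := (rho n).

Definition Roots := [set r : 'S_m | mcycle r && (froot f r == r)].
Definition orb (r : 'S_m) := [set s : 'S_m | mcycle s && (froot f s == r)].
Definition Bset := [set s : 'S_m | [exists k : 'I_(m./2), comb s (rho ^+ k.+1)]].

Lemma size_Rl : size (Rl n) = #|Roots|.
Proof. rewrite /Rl enumT size_filter cardE /enum_mem size_filter -enumT /=; apply: eq_count => s /=; rewrite /Roots; symmetry; exact: (in_set _ s). Qed.

Lemma iter_conj k s : iter k f s = s ^ (rr n ^+ k).
Proof. by elim: k => [|k IH] /=; rewrite ?expg0 ?conjg1 // IH /fc -conjgM -expgSr. Qed.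

Lemma rrXm : rr n ^+ m = 1.
Proof. by rewrite /rr expVgn rhoXm invg1. Qed.

Lemma partition_orb : #|[set s : 'S_m | mcycle s]| = (\sum_(r in Roots) #|orb r|)%N.
Proof.
rewrite -sum1_card (partition_big (froot f) (fun r => r \in Roots)) /=.
  apply: eq_bigr => r _; rewrite -sum1_card; apply: eq_bigl => s; rewrite !inE //.
move=> s; rewrite !inE => mc; rewrite (fingraph.root_root (@symf n)) eqxx andbT.
by apply: (conn_mcycle (connect_root _ s)).
Qed.

Lemma orb_iter r k : r \in Roots -> iter k f r \in orb r.
Proof.
rewrite !inE => /andP [mc /eqP rr0]; rewrite mcycle_iter //=.
have : froot f (iter k f r) = froot f r.
  by symmetry; apply/(fingraph.rootP (@symf n)); exact: fconnect_iter.
by move=> ->; rewrite rr0.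
Qed.

Lemma orb_le r : r \in Roots -> (#|orb r| <= m)%N.
Proof.
move=> rR.
have sub : orb r \subset [set iter k f r | k : 'I_m].
  apply/subsetP => s; rewrite inE => /andP [mc /eqP rs].
  have : fconnect f r s.
    move: rR; rewrite inE => /andP [_ /eqP rr0].
    by apply/(fingraph.rootP (@symf n)); rewrite rs rr0.
  case/conn_iter => k ->.
  apply/imsetP; exists (Ordinal (ltn_pmod k (ltn0Sn n))) => //=.
  by rewrite !iter_conj (expg_mod _ rrXm).
by apply: leq_trans (subset_leq_card sub) _; apply: leq_trans (leq_imset_card _ _) _; rewrite card_ord.
Qed.

Lemma orb_free r : r \in Roots -> injectiveb (fun k : 'I_m => iter k f r) -> (m <= #|orb r|)%N.
Proof.
move=> rR /injectiveP inj.
have sub : [set iter k f r | k : 'I_m] \subset orb r.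
  by apply/subsetP => s /imsetP [k _ ->]; exact: orb_iter.
by rewrite -[X in (X <= _)%N]card_ord -(card_imset _ inj) subset_leq_card.
Qed.

Lemma nonfree_B r : ~~ injectiveb (fun k : 'I_m => iter k f r) -> r \in Bset.
Proof.
move/injectiveP => ninj.
have [i [j [E ij]]] : exists i j : 'I_m, iter i f r = iter j f r /\ (i < j)%N.
  case: (boolP [exists i : 'I_m, [exists j : 'I_m, (iter i f r == iter j f r) && (i < j)%N]]).
    by case/existsP => i /existsP [j /andP [/eqP E ij]]; exists i, j.
  move/existsPn => H; case: ninj => i j E.
  case: (ltngtP i j) => [ij|ji|/val_inj //].
  - by move: (H i) => /existsPn /(_ j); rewrite E eqxx ij.
  - by move: (H j) => /existsPn /(_ i); rewrite E eqxx ji.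
set k := (j - i)%N.
have k0 : (0 < k)%N by rewrite subn_gt0.
have km : (k < m)%N by apply: leq_ltn_trans (leq_subr _ _) (ltn_ord j).
have Ek : r ^ (rr n ^+ k) = r.
  move: E; rewrite !iter_conj -(subnK (ltnW ij)) -/k expgD conjgM.
  by move/conjg_inj.
have c1 : forall y, r ((rho ^+ k) y) = (rho ^+ k) (r y).
  move/conj_fix: Ek => H y.
  have e1 : rr n ^+ k = (rho ^+ k)^-1 by rewrite /rr expVgn.
  apply: (@perm_inj _ (rr n ^+ k)); rewrite -H e1 !permK //.
have e2 : rho ^+ (m - k) = (rho ^+ k)^-1.
  by apply/eqP; rewrite eq_sym eq_invg_mul -expgD subnKC ?rhoXm // ltnW.
have c2 : forall y, r ((rho ^+ (m - k)) y) = (rho ^+ (m - k)) (r y).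
  move=> y; rewrite e2; apply: (@perm_inj _ (rho ^+ k)); rewrite permKV -c1 permKV //.
have hm := odd_double_half m.
rewrite inE; apply/existsP.
case: (leqP k (m./2)) => kp.
  have kp' : (k.-1 < m./2)%N by rewrite prednK.
  exists (Ordinal kp'); rewrite /= prednK //; apply/combP; exact: c1.
have kp' : ((m - k).-1 < m./2)%N.
  rewrite prednK ?subn_gt0 //; move: kp hm; set h := m./2; set o := odd m; move=> kp hm.
  case: o hm => /= hm; lia.
exists (Ordinal kp'); rewrite /= prednK ?subn_gt0 //; apply/combP; exact: c2.
Qed.

End Orbits.

Local Open Scope group_scope.

Section Bound.
Variable n : nat.
Local Notation m := n.+1.
Local Notation f := (@fc n).
Local Notation rho := (rho n).
Local Notation p := (m./2).

Lemma lep : (p <= m)%N.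
Proof. have := odd_double_half m; lia. Qed.

Lemma card_B : (#|Bset n| <= p.+1 * m ^ p)%N.
Proof.
pose phi (s : 'S_m) := ([pick k : 'I_p | comb s (rho ^+ k.+1)],
                        [ffun i : 'I_p => s (widen_ord lep i)]).
have inj : {in Bset n &, injective phi}.
  move=> s1 s2; rewrite !inE => /existsP [k0 H1] /existsP [k0' H2] [E1 E2].
  case: pickP E1 => [k Hk|/(_ k0)]; last by rewrite H1.
  case: pickP => [k' Hk'|/(_ k0')]; last by rewrite H2.
  move=> [Ekk]; rewrite -Ekk in Hk'.
  apply: (@comm_det n k.+1) => // i ik.
  have ip : (i < p)%N by apply: leq_trans ik (ltn_ord k).
  have := congr1 (fun g : {ffun 'I_p -> 'I_m} => g (Ordinal ip)) E2; rewrite /= !ffunE.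
  by have -> : widen_ord lep (Ordinal ip) = i by apply: val_inj.
rewrite -(card_in_imset inj); apply: leq_trans (max_card _) _.
by rewrite card_prod card_option card_ffun !card_ord.
Qed.

Lemma ineq1 : (n`! <= m * #|Roots n|)%N.
Proof.
rewrite -card_cycles partition_orb mulnC -sum_nat_const; apply: leq_sum => r rR.
exact: orb_le.
Qed.

Lemma ineq2 : (m * #|Roots n| <= n`! + m * #|Bset n|)%N.
Proof.
rewrite -card_cycles partition_orb mulnC -sum_nat_const.
apply: leq_trans (_ : (\sum_(r in Roots n) (#|orb r| + m * (r \in Bset n)) <= _)%N).
  apply: leq_sum => r rR.
  case: (boolP (injectiveb (fun k : 'I_m => iter k f r))) => H.
    by apply: leq_trans (orb_free rR H) (leq_addr _ _).
  by rewrite nonfree_B // muln1 leq_addl.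
rewrite big_split /= leq_add2l -big_distrr /= leq_mul2l; apply/orP; right.
rewrite -sum1_card big_mkcond [X in (_ <= X)%N]big_mkcond /=.
by apply: leq_sum => r _; case: (r \in Roots n); case: (r \in Bset n).
Qed.

End Bound.

Local Close Scope group_scope.

Lemma lexp a b e : a <= b -> a ^ e <= b ^ e.
Proof. by move=> ab; elim: e => [|e IH] //; rewrite !expnS leq_mul. Qed.

Lemma L_fact q p : p ^ q * p`! <= (p + q)`!.
Proof.
elim: q => [|q IH]; first by rewrite expn0 mul1n addn0.
rewrite expnS -mulnA addnS factS; apply: leq_mul => //.
by apply: leq_trans (leq_addr q p) _.
Qed.

Lemma cube_le p : p ^ 3 <= 8 ^ p.
Proof.
have h : p <= 2 ^ p by apply: ltnW; apply: ltn_expl.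
have -> : 8 = 2 ^ 3 by [].
by rewrite -expnM mulnC expnM; apply: lexp.
Qed.

Lemma arith_dummy : True. Proof. by []. Qed.

Lemma asym_fact K : exists P, forall p, P <= p -> K * 3 ^ (p + 2) * p ^ 3 <= p`!.
Proof.
set C := 9 * K * 24 ^ 48.
exists (C + 48) => p Hp.
have p48 : 48 <= p by apply: leq_trans (leq_addl _ _) Hp.
have t := subnKC p48; set t0 := p - 48 in t.
have Ct : C <= 2 ^ t0.
  apply: ltnW; apply: leq_ltn_trans (ltn_expl _ (isT : 1 < 2)).
  by rewrite /t0 leq_subRL // addnC.
apply: leq_trans (_ : K * 3 ^ (p + 2) * 8 ^ p <= _).
  by rewrite leq_mul2l cube_le orbT.
have E1 : K * 3 ^ (p + 2) * 8 ^ p = C * 24 ^ t0.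
  have e1 : 3 ^ p * 8 ^ p = 24 ^ 48 * 24 ^ t0 by rewrite -expnMn -expnD t.
  rewrite expnD /C; move: e1; generalize (3 ^ p) (8 ^ p) (24 ^ 48) (24 ^ t0) => a b c d e1.
  have -> : 3 ^ 2 = 9 by [].
  by rewrite (mulnC a 9) mulnA (mulnC K 9) -!mulnA e1.
rewrite E1; apply: leq_trans (_ : 2 ^ t0 * 24 ^ t0 <= _); first by rewrite leq_mul2r Ct orbT.
rewrite -expnMn -t; apply: leq_trans (L_fact t0 48).
by rewrite leq_pmulr // fact_gt0.
Qed.

Local Close Scope group_scope.

Lemma dimH_roots n : dimH n.+1 = #|Roots n|.
Proof. by rewrite dimH_eq size_Rl. Qed.

Lemma big_ineq K : exists N, forall n, (N <= n.+1)%N -> (K * (n.+1 * #|Bset n|) <= n`!)%N.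
Proof.
have [P HP] := asym_fact K.
exists (P.*2.+2) => n Hn.
set m := n.+1; set p := m./2.
have hm := odd_double_half m; rewrite -/p -addnn in hm.
have HP2 : (P + P + 2 <= m)%N by move: Hn; rewrite -addnn; lia.
have pP : (P <= p)%N by move: hm; case: (odd m) => /= hm; lia.
have p1 : (1 <= p)%N by move: hm; case: (odd m) => /= hm; lia.
have pm : (p.+1 <= m)%N by move: hm; case: (odd m) => /= hm; lia.
have m3p : (m <= 3 * p)%N by move: hm; case: (odd m) => /= hm; lia.
have n2p : (p + (p - 1) <= n)%N by move: hm; rewrite /m; case: (odd n.+1) => /= hm; lia.
apply: leq_trans (_ : K * m ^ (p + 2) <= _)%N.
  rewrite leq_mul2l; apply/orP; right.
  apply: leq_trans (_ : m * (p.+1 * m ^ p) <= _)%N; first by rewrite leq_mul2l card_B orbT.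
  by rewrite addn2 !expnS leq_mul2l leq_mul2r pm !orbT.
apply: leq_trans (_ : K * (3 * p) ^ (p + 2) <= _)%N; first by rewrite leq_mul2l lexp ?orbT.
have e : p + 2 = 3 + (p - 1) by lia.
rewrite expnMn (_ : p ^ (p + 2) = p ^ 3 * p ^ (p - 1)); last by rewrite -expnD -e.
rewrite [3 ^ _ * _]mulnA [K * _]mulnA.
apply: leq_trans (_ : p`! * p ^ (p - 1) <= _)%N.
  by rewrite leq_mul2r mulnA (HP p pP) orbT.
rewrite mulnC; apply: leq_trans (L_fact (p - 1) p) _; exact: leq_fact.
Qed.

Theorem theorem17 :
  (forall m : nat, (1 <= m)%N -> ((m.-1)`! <= m * dimH m)%N) /\
  (forall eps : rat, (0 < eps)%R ->
     exists N : nat, forall m : nat, (N <= m)%N -> (1 <= m)%N ->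
       (`| (dimH m)%:R * m%:R / (m.-1)`!%:R - 1 | < eps)%R).
Proof.
split.
  by case => // n _; rewrite dimH_roots; exact: ineq1.
move=> eps eps0.
set K := Num.bound (eps^-1).
have HK : (1 < eps * K%:R)%R.
  have ei : (0 <= eps^-1)%R by rewrite invr_ge0 ltW.
  have := archi_boundP ei; rewrite -/K => H.
  have : (eps * eps^-1 < eps * K%:R)%R by rewrite ltr_pM2l.
  by rewrite mulfV // lt0r_neq0.
have [N HN] := big_ineq K.
exists N; case => [|n] Hn m1 //.
rewrite dimH_roots -[n.+1.-1]/n.
set h := #|Roots n|; set c := n`!; set B := n.+1 * #|Bset n|.
have i1 : (c <= n.+1 * h)%N := ineq1 n.
have i2 : (n.+1 * h <= c + B)%N := ineq2 n.
have i3 : (K * B <= c)%N := HN n Hn.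
have c0 : (0 < c)%N := fact_gt0 n.
set x := (n.+1 * h)%N in i1 i2.
have -> : (h%:R * n.+1%:R = x%:R :> rat)%R by rewrite -natrM mulnC.
set d := (x - c)%N.
have xd : x = (c + d)%N by rewrite subnKC.
have dB : (d <= B)%N by rewrite leq_subLR.
have Kd : (K * d <= c)%N by apply: leq_trans i3; rewrite leq_mul2l dB orbT.
have Kdr : (K%:R * d%:R <= c%:R :> rat)%R by rewrite -natrM ler_nat.
have c0r : (0 < c%:R :> rat)%R by rewrite ltr0n.
have d0r : (0 <= d%:R :> rat)%R by rewrite ler0n.
have -> : (x%:R / c%:R - 1 = d%:R / c%:R :> rat)%R.
  by rewrite xd natrD mulrDl mulfV ?(lt0r_neq0 c0r) // addrC addKr.
rewrite ger0_norm; last by rewrite divr_ge0 // ltW.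
rewrite ltr_pdivrMr //.
case: (eqVneq d 0%N) => [->|dn0]; first by rewrite mulr_gt0.
have dpos : (0 < d%:R :> rat)%R by rewrite ltr0n lt0n.
nra.
Qed.
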